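(* For every $d\ge1$ and all sufficiently small $\epsilon>0$, the following holds. For any learning-to-rent algorithm there exists a family of $1$-Lipschitz joint distributions of $(x,y)$ with $x\in[0,1]^d$, $y\in(0,\infty)$, such that if the algorithm uses at most $1/\epsilon^{d/4}$ samples then its expected competitive ratio (over a uniformly random member of the family and the samples) exceeds $(1+\epsilon)$ times the optimum, where for each member of the family the optimal threshold function achieves expected competitive ratio $1$. In particular, $(1+\epsilon)$-accuracy requires $1/\epsilon^{\Omega(d)}$ samples.
   Context: Ski-rental setting: buying costs $1$, renting costs $1$ per unit time, season length $y>0$; a threshold $\theta\ge0$ means rent until time $\theta$ then buy, with competitive ratio $g(\theta,y)=\frac{1+\theta}{\min\{1,y\}}$ if $y\ge\theta$ and $\frac{y}{\min\{1,y\}}$ otherwise. In the learning-to-rent problem the algorithm receives i.i.d. samples of $(x,y)$ from an unknown joint distribution $\mathbb{K}$ and outputs a threshold function $\theta_A(x)$; its expected competitive ratio is $\mathbb{E}_{(x,y)\sim\mathbb{K}}[g(\theta_A(x),y)]$, and it is $(1+\epsilon)$-accurate if this is at most $(1+\epsilon)\inf_{\theta(\cdot)}\mathbb{E}_{(x,y)\sim\mathbb{K}}[g(\theta(x),y)]$. Earth mover distance between distributions on $\mathbb{R}$: $\mathrm{EMD}(\mathbb{X},\mathbb{Y})=\min\mathbb{E}_{(u,v)\sim\mathbb{J}}|u-v|$ over couplings $\mathbb{J}$ of $\mathbb{X},\mathbb{Y}$. A joint distribution of $(x,y)$ is $L$-Lipschitz if for all $x_1,x_2$ (in the support of $x$)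 the conditional distributions $y\mid x_1$ and $y\mid x_2$ have EMD at most $L\|x_1-x_2\|_2$. *)

(* Defs.v *)
From HB Require Import structures.
From mathcomp Require Import all_boot all_order all_algebra.
From mathcomp Require Import reals exp.
Set Implicit Arguments. Unset Strict Implicit. Unset Printing Implicit Defensive.
Import Order.TTheory GRing.Theory Num.Theory.
Local Open Scope ring_scope.

Section LearningToRent.
Variables (R : realType) (d : nat).

Definition feat := 'rV[R]_d.

Definition dist2 (x1 x2 : feat) : R :=
  Num.sqrt (\sum_(i < d) (x1 ord0 i - x2 ord0 i) ^+ 2).

(* competitive ratio of threshold theta on season length y *)
Definition g (theta y : R) : R :=
  if theta <= y then (1 + theta) / Num.min 1 y else y / Num.min 1 y.

(* A finitely supported probability distribution on T, given as a list of
   weighted atoms (weight, point). *)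
Definition is_dist (T : eqType) (s : seq (R * T)) : Prop :=
  (forall p, p \in s -> 0 <= p.1)%R /\ \sum_(p <- s) p.1 = 1.
Arguments is_dist : clear implicits.

Definition expect (T : Type) (s : seq (R * T)) (f : T -> R) : R :=
  \sum_(p <- s) p.1 * f p.2.

Definition mass (T : eqType) (s : seq (R * T)) (t : T) : R :=
  \sum_(p <- s | p.2 == t) p.1.

Definition joint := seq (R * (feat * R)).

Definition is_joint (K : joint) : Prop :=
  is_dist (feat * R)%type K /\
  (forall p, p \in K -> (forall i, 0 <= p.2.1 ord0 i <= 1) /\ 0 < p.2.2).

Definition xmass (K : joint) (x : feat) : R := \sum_(p <- K | p.2.1 == x) p.1.
Definition in_xsupp (K : joint) (x : feat) : Prop := 0 < xmass K x.

Definition cond (K : joint) (x : feat) : seq (R * R) :=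
  [seq (p.1 / xmass K x, p.2.2) | p <- K & p.2.1 == x].

Definition coupling (J : seq (R * (R * R))) (a b : seq (R * R)) : Prop :=
  is_dist (R * R)%type J /\
  (forall u, mass [seq (p.1, p.2.1) | p <- J] u = mass a u) /\
  (forall v, mass [seq (p.1, p.2.2) | p <- J] v = mass b v).

(* EMD(a,b) <= c  (the minimum over couplings is attained, so this is
   "some coupling has cost <= c") *)
Definition emd_le (a b : seq (R * R)) (c : R) : Prop :=
  exists J, coupling J a b /\ expect J (fun uv => `|uv.1 - uv.2|) <= c.

Definition lipschitz (L : R) (K : joint) : Prop :=
  forall x1 x2, in_xsupp K x1 -> in_xsupp K x2 ->
    emd_le (cond K x1) (cond K x2) (L * dist2 x1 x2).

Definition ecr (K : joint) (theta : feat -> R) : R :=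
  expect K (fun xy => g (theta xy.1) xy.2).

Definition threshold_fun (theta : feat -> R) : Prop := forall x, 0 <= theta x.

Definition opt_is (K : joint) (c : R) : Prop :=
  (exists theta, threshold_fun theta /\ ecr K theta = c) /\
  (forall theta, threshold_fun theta -> c <= ecr K theta).

Fixpoint Esamp (K : joint) (n : nat) (F : seq (feat * R) -> R) : R :=
  match n with
  | 0 => F [::]
  | n'.+1 => \sum_(p <- K) p.1 * Esamp K n' (fun s => F (p.2 :: s))
  end.

Definition algorithm := seq (feat * R) -> feat -> R.
Definition valid_alg (A : algorithm) : Prop := forall s, threshold_fun (A s).

Definition avg_ecr (A : algorithm) (F : seq joint) (n : nat) : R :=
  (size F)%:R^-1 * \sum_(K <- F) Esamp K n (fun S => ecr K (A S)).

End LearningToRent.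

(* Main.v *)
Require Import Defs.
From HB Require Import structures.
From mathcomp Require Import all_boot all_order all_algebra.
From mathcomp Require Import reals exp.
From mathcomp Require Import ring lra.
Import Order.TTheory GRing.Theory Num.Theory.
Local Open Scope ring_scope.

Lemma g_ge1 (R : realType) (th y : R) : 0 <= th -> 0 < y -> 1 <= g th y.
Proof.
move=> h0 hy; rewrite /g.
have hm : 0 < Num.min 1 y by rewrite lt_min ltr01 hy.
have hm1 : Num.min 1 y <= 1 by rewrite ge_min lexx.
have hmy : Num.min 1 y <= y by rewrite ge_min lexx orbT.
case: ifP => _; rewrite ler_pdivlMr // mul1r; lra.
Qed.

Lemma g_pair (R : realType) (th e : R) : 0 <= th -> 0 < e -> e <= 1/2 ->
  2 + e <= g th (1 + e) + g th (1 - e).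
Proof.
move=> h0 he he2; rewrite /g.
have m1 : Num.min 1 (1 + e) = 1 by apply/min_l; lra.
have m2 : Num.min 1 (1 - e) = 1 - e by apply/min_r; lra.
rewrite m1 m2 divr1.
have pe : 0 < 1 - e by lra.
case: (lerP th (1 - e)) => h1.
  have -> : th <= 1 + e by lra.
  set q := (1 + th) / (1 - e).
  have hq : q * (1 - e) = 1 + th by rewrite /q divfK //; lra.
  have : 1 + e <= q.
    rewrite /q ler_pdivlMr //; nra.
  lra.
rewrite divff; last lra.
case: (lerP th (1 + e)) => h2; lra.
Qed.
Section Con.
Variables (R : realType) (d k : nat).
Hypothesis hk : (0 < k)%N.

Local Notation T := {ffun 'I_d -> 'I_k}.
Definition pt (t : T) : feat R d := \row_j ((t j)%:R / k%:R).
Definition del : R := (2 * k%:R)^-1.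
Definition yv (b : bool) : R := if b then 1 + del else 1 - del.
Definition mm : R := #|T|%:R.
Definition ptY (s : {ffun T -> bool}) (t : T) : feat R d * R := (pt t, yv (s t)).
Definition KK (s : {ffun T -> bool}) : joint R d :=
  [seq (mm^-1, ptY s t) | t <- enum T].

Lemma card_T : #|T| = (k ^ d)%N.
Proof. by rewrite card_ffun !card_ord. Qed.

Lemma mm_gt0 : 0 < mm.
Proof. by rewrite /mm ltr0n card_T expn_gt0 hk. Qed.

Lemma k_gt0 : 0 < k%:R :> R.
Proof. by rewrite ltr0n. Qed.

Lemma del_gt0 : 0 < del.
Proof. by rewrite /del invr_gt0 mulr_gt0 // k_gt0. Qed.

Lemma del_le : del <= 1/2.
Proof.
rewrite /del mul1r lef_pV2 ?posrE ?mulr_gt0 ?k_gt0 //.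
have : 1 <= k%:R :> R by rewrite ler1n.
lra.
Qed.

Lemma pt_inj : injective pt.
Proof.
move=> t1 t2 /rowP h; apply/ffunP => j; apply/val_inj.
have := h j; rewrite !mxE => /(congr1 (fun z => z * k%:R)).
rewrite !divfK ?lt0r_neq0 ?k_gt0 //.
by move/eqP; rewrite eqr_nat => /eqP.
Qed.

Lemma dist_ge (t1 t2 : T) : t1 != t2 -> k%:R^-1 <= dist2 (pt t1) (pt t2).
Proof.
move=> hne.
have [j hj] : exists j, t1 j != t2 j.
  apply/existsP; apply: contraR hne; rewrite negb_exists => /forallP h.
  by apply/eqP/ffunP => j; apply/eqP; have := h j; rewrite negbK.
rewrite /dist2.
set w : R := k%:R^-1.
have hw : 0 < w by rewrite /w invr_gt0 k_gt0.
have hterm : w ^+ 2 <= (pt t1 ord0 j - pt t2 ord0 j) ^+ 2.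
  rewrite /pt !mxE.
  set u := (t1 j)%:R : R; set v := (t2 j)%:R : R.
  have huv : u + 1 <= v \/ v + 1 <= u.
    case: (ltngtP (t1 j) (t2 j)) => h.
    - by left; rewrite /u /v natr1 ler_nat.
    - by right; rewrite /u /v natr1 ler_nat.
    - by move: hj; rewrite (val_inj h) eqxx.
  rewrite -/w.
  have h1 : 1 <= (v - u) ^+ 2 by case: huv => h; nra.
  have -> : (u * w - v * w) ^+ 2 = (v - u) ^+ 2 * w ^+ 2 by ring.
  by rewrite ler_peMl // sqr_ge0.
have hsum : (pt t1 ord0 j - pt t2 ord0 j) ^+ 2 <=
      \sum_(i < d) (pt t1 ord0 i - pt t2 ord0 i) ^+ 2.
  rewrite (bigD1 j) //= lerDl; apply: sumr_ge0 => i _; exact: sqr_ge0.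
have : w ^+ 2 <= \sum_(i < d) (pt t1 ord0 i - pt t2 ord0 i) ^+ 2 by apply: le_trans hsum.
move=> hh; rewrite -(ger0_norm (ltW hw)) -sqrtr_sqr ler_sqrt //.
by apply: sumr_ge0 => i _; exact: sqr_ge0.
Qed.


Lemma filter_pt (t1 : T) :
  [seq t <- enum T | pt t == pt t1] = [:: t1].
Proof.
rewrite (eq_filter (a2 := pred1 t1)); last first.
  by move=> t /=; apply/eqP/eqP => [/pt_inj|->].
by rewrite filter_pred1_uniq ?enum_uniq ?mem_enum.
Qed.

Lemma xmass_pt (s : {ffun T -> bool}) (t1 : T) : xmass (KK s) (pt t1) = mm^-1.
Proof.
rewrite /xmass /KK big_map /= -big_filter.
have -> : [seq i <- enum T | pt i == pt t1] = [:: t1] by apply: filter_pt.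
by rewrite big_seq1.
Qed.

Lemma xsupp_pt (s : {ffun T -> bool}) x : in_xsupp (KK s) x -> exists t, x = pt t.
Proof.
rewrite /in_xsupp /xmass /KK big_map /=.
case: (boolP (has (fun t => pt t == x) (enum T))) => [/hasP [t _ /eqP <-]|hn].
  by exists t.
by rewrite big_hasC // ltxx.
Qed.

Lemma cond_pt (s : {ffun T -> bool}) (t1 : T) :
  cond (KK s) (pt t1) = [:: (1, yv (s t1))].
Proof.
rewrite /cond xmass_pt /KK filter_map /=.
have -> : [seq x <- enum T | preim (fun t => (mm^-1, ptY s t))
            (fun p => p.2.1 == pt t1) x] = [:: t1] by apply: filter_pt.
by rewrite /= divff // invr_neq0 // lt0r_neq0 // mm_gt0.
Qed.

Lemma sum_w : \sum_(t <- enum T) mm^-1 = 1.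
Proof.
rewrite big_enum /= sumr_const -mulr_natr mulVf //.
exact: lt0r_neq0 mm_gt0.
Qed.

Lemma yv_gt0 b : 0 < yv b.
Proof. have := del_gt0; have := del_le; rewrite /yv; case: b; lra. Qed.

Lemma KK_joint s : is_joint (KK s).
Proof.
split; first split.
- move=> p /mapP [t _ ->] /=; rewrite invr_ge0; exact: ltW mm_gt0.
- by rewrite /KK big_map /= sum_w.
move=> p /mapP [t _ ->] /=; split; last exact: yv_gt0.
move=> i; rewrite /pt mxE; apply/andP; split.
  by rewrite divr_ge0 // ler0n.
by rewrite ler_pdivrMr ?k_gt0 // mul1r ler_nat ltnW.
Qed.

Lemma emd_single (y1 y2 c : R) : `|y1 - y2| <= c ->
  emd_le [:: (1, y1)] [:: (1, y2)] c.
Proof.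
move=> h; exists [:: (1, (y1, y2))]; split.
  split; first split.
  - by move=> p; rewrite inE => /eqP -> /=.
  - by rewrite big_seq1.
  by split.
by rewrite /expect big_seq1 /= mul1r.
Qed.

Lemma KK_lip s : lipschitz 1 (KK s).
Proof.
move=> x1 x2 /xsupp_pt [t1 ->] /xsupp_pt [t2 ->].
rewrite !cond_pt mul1r; apply: emd_single.
case: (eqVneq t1 t2) => [->|hne].
  rewrite subrr normr0 /dist2; exact: sqrtr_ge0.
have hD := dist_ge _ _ hne. apply: (le_trans _ hD).
have hd := del_gt0.
have hke : k%:R^-1 = 2 * del :> R.
  by rewrite /del invfM mulrA divff ?mul1r // pnatr_eq0.
rewrite hke /yv; case: (s t1); case: (s t2);
  rewrite ?subrr ?normr0; try lra.
- by rewrite ger0_norm; lra.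
- by rewrite ler0_norm; lra.
Qed.

Lemma KK_opt s : opt_is (KK s) 1.
Proof.
split.
  exists (fun x => if [exists t, (pt t == x) && ~~ s t] then 1 else 0).
  split; first by move=> x /=; case: ifP.
  rewrite /ecr /expect /KK big_map /= -[RHS]sum_w; apply: eq_bigr => t _ /=.
  have hd := del_gt0; have hd2 := del_le.
  case: (boolP (s t)) => hs.
    have -> : [exists t0, (pt t0 == pt t) && ~~ s t0] = false.
      apply/negbTE; rewrite negb_exists; apply/forallP => t0.
      by apply/negP => /andP [/eqP /pt_inj -> ]; rewrite hs.
    rewrite /ptY /g /yv /= ifT; last lra.
    by rewrite addr0 min_l ?divr1 ?mulr1 //; lra.
  have -> : [exists t0, (pt t0 == pt t) && ~~ s t0] by apply/existsP; exists t; rewrite eqxx hs.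
  rewrite /ptY /g /yv /= ifF; last by apply/negbTE; rewrite -ltNge; lra.
  by rewrite min_r ?divff ?mulr1 //; lra.
move=> th hth; rewrite /ecr /expect /KK big_map /= -sum_w.
apply: ler_sum => t _; rewrite -[X in X <= _]mulr1 ler_wpM2l //.
  rewrite invr_ge0; exact: ltW mm_gt0.
apply: g_ge1 => //; exact: yv_gt0.
Qed.


Fixpoint EU n (G : seq T -> R) : R :=
  match n with
  | 0 => G [::]
  | n'.+1 => \sum_(t <- enum T) mm^-1 * EU n' (fun l => G (t :: l))
  end.

Lemma Esamp_EU s n (G : seq (feat R d * R) -> R) :
  Esamp (KK s) n G = EU n (fun l => G (map (ptY s) l)).
Proof.
elim: n G => [|n IH] G //=.
rewrite /KK big_map; apply: eq_bigr => t _ /=; by rewrite IH.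
Qed.

Lemma EU_sum (I : Type) (r : seq I) n (G : I -> seq T -> R) :
  \sum_(i <- r) EU n (G i) = EU n (fun l => \sum_(i <- r) G i l).
Proof.
elim: n G => [|n IH] G //=.
rewrite exchange_big /=; apply: eq_bigr => t _.
by rewrite -mulr_sumr IH.
Qed.

Lemma EU_lb n c (G : seq T -> R) :
  (forall l, size l = n -> c <= G l) -> c <= EU n G.
Proof.
elim: n G => [|n IH] G h /=; first exact: h.
rewrite -[c]mul1r -sum_w mulr_suml; apply: ler_sum => t _.
rewrite ler_wpM2l //; first by rewrite invr_ge0; exact: ltW mm_gt0.
by apply: IH => l hl; apply: h; rewrite /= hl.
Qed.

Definition flip (t : T) (s : {ffun T -> bool}) : {ffun T -> bool} :=
  [ffun u => if u == t then ~~ s u else s u].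

Lemma flipK t : involutive (flip t).
Proof.
move=> s; apply/ffunP => u; rewrite !ffunE.
by case: (u == t) => //; rewrite negbK.
Qed.

Lemma flip_bound (A : algorithm R d) (l : seq T) (t : T) :
  valid_alg A -> t \notin l ->
  #|{ffun T -> bool}|%:R * (1 + del / 2) <=
  \sum_(s : {ffun T -> bool}) g (A (map (ptY s) l) (pt t)) (yv (s t)).
Proof.
move=> hA htl.
set F := fun s : {ffun T -> bool} => g (A (map (ptY s) l) (pt t)) (yv (s t)).
have hmap : forall s, map (ptY (flip t s)) l = map (ptY s) l.
  move=> s; apply/eq_in_map => u hu; rewrite /ptY ffunE.
  by case: eqP => // e; move: htl; rewrite -e hu.
have e1 : \sum_s F s = \sum_s F (flip t s).
  exact: (reindex_inj (can_inj (flipK t))).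
have h2 : #|{ffun T -> bool}|%:R * (2 + del) <= \sum_s (F s + F (flip t s)).
  rewrite mulr_natl -sumr_const; apply: ler_sum => s _.
  rewrite /F hmap ffunE eqxx.
  have hth := hA (map (ptY s) l) (pt t).
  case: (s t) => /=; rewrite /yv.
  - exact: (g_pair _ _ _ hth del_gt0 del_le).
  - rewrite [X in _ <= X]addrC; exact: (g_pair _ _ _ hth del_gt0 del_le).
move: h2; rewrite big_split /= -e1.
have : 0 <= #|{ffun T -> bool}|%:R :> R by rewrite ler0n.
nra.
Qed.


Lemma count_le (l : seq T) : \sum_(t <- enum T) ((t \in l)%:R : R) <= (size l)%:R.
Proof.
have -> : \sum_(t <- enum T) ((t \in l)%:R : R) = (count (mem l) (enum T))%:R.
  rewrite -sum1_count natr_sum [RHS]big_mkcond /=; apply: eq_bigr => t _.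
  by case: (t \in l).
rewrite ler_nat -size_filter; apply: uniq_leq_size.
  by rewrite filter_uniq // enum_uniq.
by move=> t; rewrite mem_filter => /andP [].
Qed.

Lemma per_l (A : algorithm R d) (l : seq T) : valid_alg A ->
  (2 * size l <= #|T|)%N ->
  #|{ffun T -> bool}|%:R * (1 + del / 4) <=
  \sum_(s <- enum {ffun T -> bool}) ecr (KK s) (A (map (ptY s) l)).
Proof.
move=> hA hsz.
set N : R := #|{ffun T -> bool}|%:R.
have hN : 0 <= N by rewrite ler0n.
have hd := del_gt0.
have hm := mm_gt0.
have hX : forall t, N * (1 + del / 2) - N * (del / 2) * (t \in l)%:R <=
    \sum_(s <- enum {ffun T -> bool}) g (A (map (ptY s) l) (pt t)) (yv (s t)).
  move=> t; rewrite big_enum /=.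
  case: (boolP (t \in l)) => htl /=.
    rewrite mulr1 mulrDr mulr1 addrK -[N]mulr1 /N mulr_natl -sumr_const.
    apply: ler_sum => s _; apply: g_ge1; [exact: hA | exact: yv_gt0].
  by rewrite mulr0 subr0; apply: flip_bound.
have hsum : \sum_(s <- enum {ffun T -> bool}) ecr (KK s) (A (map (ptY s) l)) =
   \sum_(t <- enum T) mm^-1 *
     \sum_(s <- enum {ffun T -> bool}) g (A (map (ptY s) l) (pt t)) (yv (s t)).
  rewrite (eq_bigr (fun s => \sum_(t <- enum T) mm^-1 * g (A (map (ptY s) l) (pt t)) (yv (s t)))).
    by rewrite exchange_big /=; apply: eq_bigr => t _; rewrite mulr_sumr.
  by move=> s _; rewrite /ecr /expect /KK big_map.
rewrite hsum.
have hle : \sum_(t <- enum T) mm^-1 * (N * (1 + del / 2) - N * (del / 2) * (t \in l)%:R)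
    <= \sum_(t <- enum T) mm^-1 *
     \sum_(s <- enum {ffun T -> bool}) g (A (map (ptY s) l) (pt t)) (yv (s t)).
  apply: ler_sum => t _; apply: ler_wpM2l; last exact: hX.
  by rewrite invr_ge0 ltW.
apply: le_trans hle.
rewrite (eq_bigr (fun t => N * (1 + del / 2) * mm^-1 - (N * (del / 2) * mm^-1) * (t \in l)%:R)); last first.
  by move=> t _; ring.
rewrite sumrB -!mulr_sumr sum_w mulr1.
have hc := count_le l.
have hsz' : 2 * (size l)%:R <= mm :> R.
  by rewrite /mm -natrM ler_nat.
have hq : mm^-1 * \sum_(t <- enum T) ((t \in l)%:R : R) <= 1/2.
  rewrite -ler_pdivlMl ?invr_gt0 // invrK.
  have : 0 < mm := hm. lra.
have hq0 : 0 <= mm^-1 * \sum_(t <- enum T) ((t \in l)%:R : R).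
  apply: mulr_ge0; first by rewrite invr_ge0 ltW.
  by apply: sumr_ge0 => t _; rewrite ler0n.
set q := mm^-1 * _ in hq hq0.
rewrite -[_ * mm^-1 * _]mulrA -/q.
have hp : 0 <= N * (del / 2) by rewrite mulr_ge0 // divr_ge0 // ltW.
have : N * (del / 2) * q <= N * (del / 2) * (1/2) by apply: ler_wpM2l.
lra.
Qed.

End Con.

Theorem mainTheorem8 (R : realType) (d : nat) (hd : (1 <= d)%N) :
  exists eps0 : R, 0 < eps0 /\
  forall eps : R, 0 < eps -> eps < eps0 ->
  forall A : algorithm R d, valid_alg A ->
  exists F : seq (joint R d),
    F != [::] /\
    (forall K, K \in F -> is_joint K /\ lipschitz 1 K /\ opt_is K 1) /\
    (forall n : nat, n%:R <= powR eps (- (d%:R / 4)) ->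
       avg_ecr A F n > (1 + eps) * 1).
Proof.
exists (256^-1); split; first by rewrite invr_gt0 ltr0n.
move=> eps he heps A hA.
set u := powR eps (-(1/4)).
have hu0 : 0 <= u := powR_ge0 _ _.
have hu4 : u ^+ 4 = eps^-1.
  rewrite /u -powR_mulrn ?powR_ge0 // -powRrM.
  have -> : -(1/4) * 4%:R = -1 :> R by field.
  by rewrite powR_inv1 // ltW.
have hud : powR eps (- (d%:R / 4)) = u ^+ d.
  rewrite /u -powR_mulrn ?powR_ge0 // -powRrM.
  by congr (_ `^ _); field.
have hie : eps * eps^-1 = 1 by rewrite mulfV // lt0r_neq0.
have h256 : 256 * 256^-1 = 1 :> R by rewrite mulfV // pnatr_eq0.
have hinv : 256 < eps^-1 by nra.
have hu : 4 < u.
  rewrite ltNge; apply/negP => h.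
  have h2 : u ^+ 2 <= 16 by nra.
  have : u ^+ 4 <= 256 by nra.
  lra.
set V := (16 * eps)^-1.
have hV : 16 * eps * V = 1 by rewrite mulfV // mulf_neq0 // lt0r_neq0.
have hV0 : 0 <= V by rewrite invr_ge0 mulr_ge0 // ltW.
set k := Num.truncn V.
have /andP [hk1 hk2] := truncn_itv hV0.
rewrite -/k -natr1 in hk1 hk2.
have hVu : 16 * V = u ^+ 4.
  rewrite hu4; apply: (mulfI (lt0r_neq0 he)); rewrite hie; lra.
have h2u : 2 * u < k%:R.
  have h2 : 16 <= u ^+ 2 by nra.
  have h3 : 16 * u <= u ^+ 3 by nra.
  have h4 : 64 * u <= u ^+ 4 by nra.
  lra.
have hkR : 0 < k%:R :> R by lra.
have hk : (0 < k)%N by rewrite -(ltr0n R).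
have hdel : 2 * eps <= del R k / 4.
  have hD : 2 * k%:R * del R k = 1 by rewrite /del mulfV // mulf_neq0 // lt0r_neq0.
  have hkV : 16 * eps * k%:R <= 1 by nra.
  have hD0 : 0 < del R k by rewrite /del invr_gt0 mulr_gt0.
  nra.
exists [seq KK R d k s | s <- enum {ffun {ffun 'I_d -> 'I_k} -> bool}].
split.
  rewrite -size_eq0 size_map -cardE -lt0n; apply/card_gt0P.
  by exists [ffun => true].
split.
  move=> K /mapP [s _ ->]; split; first exact: KK_joint.
  by split; [exact: KK_lip | exact: KK_opt].
move=> n hn.
rewrite mulr1 /avg_ecr size_map -cardE big_map.
under eq_bigr do rewrite Esamp_EU.
rewrite EU_sum.
set N : R := #|{ffun {ffun 'I_d -> 'I_k} -> bool}|%:R.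
have hN : 0 < N by rewrite ltr0n; apply/card_gt0P; exists [ffun => true].
have hsz : (2 * n <= #|{ffun 'I_d -> 'I_k}|)%N.
  rewrite card_T -(ler_nat R) natrM natrX.
  have e1 : 2 * u ^+ d <= (2 * u) ^+ d.
    rewrite exprMn ler_wpM2r ?exprn_ge0 //.
    by rewrite -[X in X <= _]expr1 ler_eXn2l // ltr1n.
  have e2 : (2 * u) ^+ d <= k%:R ^+ d.
    apply: lerXn2r; rewrite ?nnegrE; lra.
  rewrite hud in hn; lra.
have hlb : N * (1 + del R k / 4) <=
    EU R d k n (fun l => \sum_(i <- enum {ffun {ffun 'I_d -> 'I_k} -> bool})
       ecr (KK R d k i) (A [seq ptY R d k i x | x <- l])).
  apply: (@EU_lb _ _ _ hk) => l hl; apply: (@per_l _ _ _ hk _ _ hA); by rewrite hl.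
set X := EU _ _ _ _ _ in hlb *.
have : N^-1 * (N * (1 + del R k / 4)) <= N^-1 * X.
  by apply: ler_wpM2l => //; rewrite invr_ge0 ltW.
rewrite mulKf ?lt0r_neq0 //.
lra.
Qed.
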